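(* Let $L$ be a commutative C-loop and let $A$ be the subloop of $L$ generated by all associators $[x,y,z]$, $x,y,z\in L$. Then $a^2=e$ for every $a\in A$.
   Context: A C-loop is a loop satisfying $x(y(yz))=((xy)y)z$ for all $x,y,z$. The associator $[x,y,z]$ is the unique element $u$ with $(xy)z=(x(yz))u$. *)

(* Defs.v *)
Definition is_loop {T : Type} (mul : T -> T -> T) (e : T) : Prop :=
  (forall x, mul e x = x /\ mul x e = x) /\
  (forall a b, exists x, mul a x = b /\ forall x', mul a x' = b -> x' = x) /\
  (forall a b, exists y, mul y a = b /\ forall y', mul y' a = b -> y' = y).

Definition is_commutative {T : Type} (mul : T -> T -> T) : Prop :=
  forall x y, mul x y = mul y x.

Definition is_C_loop {T : Type} (mul : T -> T -> T) (e : T) : Prop :=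
  is_loop mul e /\
  forall x y z, mul x (mul y (mul y z)) = mul (mul (mul x y) y) z.

(* u is the associator [x,y,z]: the unique u with (xy)z = (x(yz))u
   (unique in a loop by left cancellation). *)
Definition is_associator {T : Type} (mul : T -> T -> T) (x y z u : T) : Prop :=
  mul (mul x y) z = mul (mul x (mul y z)) u.

Definition is_subloop {T : Type} (mul : T -> T -> T) (e : T) (S : T -> Prop) : Prop :=
  S e /\
  (forall a b, S a -> S b -> S (mul a b)) /\
  (forall a b x, S a -> S b -> mul a x = b -> S x) /\
  (forall a b y, S a -> S b -> mul y a = b -> S y).

Definition associator_subloop {T : Type} (mul : T -> T -> T) (e : T) (a : T) : Prop :=
  forall S : T -> Prop,
    is_subloop mul e S ->
    (forall x y z u, is_associator mul x y z u -> S u) ->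
    S a.

(* Main.v *)
Require Import Defs.

Lemma cl_idl {T} {m : T -> T -> T} {e} : is_C_loop m e -> forall x, m e x = x.
Proof. intros [[H _] _] x. apply H. Qed.
Lemma cl_idr {T} {m : T -> T -> T} {e} : is_C_loop m e -> forall x, m x e = x.
Proof. intros [[H _] _] x. apply H. Qed.
Lemma cl_canl {T} {m : T -> T -> T} {e} : is_C_loop m e -> forall a x y, m a x = m a y -> x = y.
Proof. intros [[_ [H _]] _] a x y E. destruct (H a (m a x)) as [x0 [_ U]].
  rewrite (U x eq_refl), (U y (eq_sym E)). reflexivity. Qed.
Lemma cl_rdiv {T} {m : T -> T -> T} {e} : is_C_loop m e -> forall a b, exists y, m y a = b.
Proof. intros [[_ [_ H]] _] a b. destruct (H a b) as [y [Hy _]]. eauto. Qed.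
Lemma cl_ldiv {T} {m : T -> T -> T} {e} : is_C_loop m e -> forall a b, exists y, m a y = b.
Proof. intros [[_ [H _]] _] a b. destruct (H a b) as [y [Hy _]]. eauto. Qed.
Lemma cl_C {T} {m : T -> T -> T} {e} : is_C_loop m e -> forall x y z,
  m x (m y (m y z)) = m (m (m x y) y) z.
Proof. intros [_ H]. exact H. Qed.

Section S.
Context (T : Type) (m : T -> T -> T) (e : T) (HL : is_C_loop m e) (Hc : is_commutative m).

Lemma L1 x y : m (m x y) y = m x (m y y).
Proof. pose proof (cl_C HL x y e) as H. rewrite !(cl_idr HL) in H. auto. Qed.

Lemma RIP y y' w : m y y' = e -> m (m w y) y' = w.
Proof. intros Hy. destruct (cl_rdiv HL y w) as [x Hx]. subst w.
  pose proof (cl_C HL x y y') as H. rewrite Hy, (cl_idr HL) in H. auto. Qed.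

Lemma LIP y y' w : m y y' = e -> m y' (m y w) = w.
Proof. intros Hy. rewrite Hc, (Hc y w). apply RIP; auto. Qed.

Lemma inv_ex y : exists y', m y y' = e.
Proof. apply (cl_ldiv HL). Qed.

Lemma AAIP a a' b b' : m a a' = e -> m b b' = e -> m (m a b) (m a' b') = e.
Proof. intros Ha Hb. destruct (inv_ex (m a b)) as [p' Hp].
  assert (E1 : m a' (m a b) = b) by (apply LIP; auto).
  assert (E2 : m (m a' (m a b)) p' = a') by (apply RIP; auto).
  rewrite E1 in E2.
  assert (E3 : m (m p' b) b' = p') by (apply RIP; auto).
  rewrite (Hc p' b), E2 in E3. rewrite E3. auto. Qed.

Lemma mid y x z : m (m x (m y y)) z = m x (m (m y y) z).
Proof. pose proof (cl_C HL x y z) as H. rewrite L1 in H.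
  rewrite (Hc y z), (Hc y (m z y)), L1, (Hc z) in H. auto. Qed.

Lemma left y u z : m (m u (m y y)) z = m (m y y) (m u z).
Proof.
  set (n := m y y).
  destruct (inv_ex y) as [y' Hy].
  assert (Hn : m n (m y' y') = e) by (apply AAIP; auto).
  set (n' := m y' y') in *.
  assert (Hn' : m n' n = e) by (rewrite Hc; auto).
  assert (G : forall w w' y0, m w w' = e -> m (m w' n) (m w y0) = m n y0).
  { intros w w' y0 Hw.
    pose proof (mid y (m w n') y0) as M. fold n in M.
    rewrite (RIP n' n w Hn') in M.
    assert (Hi : m (m w n') (m w' n) = e) by (apply AAIP; auto).
    pose proof (LIP (m w n') (m w' n) (m n y0) Hi) as K.
    rewrite <- M in K. exact K. }
  destruct (inv_ex u) as [u' Hu].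
  assert (Hu' : m u' u = e) by (rewrite Hc; auto).
  pose proof (G u' u (m u z) Hu') as K.
  rewrite (LIP u u' z Hu) in K. exact K. Qed.

Lemma assoc_sq y q r : m (m (m y y) q) r = m (m y y) (m q r).
Proof. rewrite (Hc _ q). apply left. Qed.

Lemma canr a x y : m x a = m y a -> x = y.
Proof. intros E. rewrite (Hc x), (Hc y) in E. exact (cl_canl HL _ _ _ E). Qed.

Lemma hom a b : m (m a b) (m a b) = m (m a a) (m b b).
Proof.
  pose proof (L1 a (m a b)) as H.
  assert (E1 : m a (m a b) = m (m a a) b).
  { rewrite (Hc a (m a b)), (Hc a b), L1. apply Hc. }
  rewrite E1, assoc_sq in H.
  assert (E2 : m b (m a b) = m a (m b b)) by (rewrite (Hc b (m a b)), L1; auto).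
  rewrite E2, (Hc a (m b b)), <- left, (Hc (m b b)) in H.
  rewrite (Hc a (m (m a b) (m a b))) in H.
  symmetry. exact (canr a _ _ H). Qed.

End S.

Theorem corollary5p3 (T : Type) (mul : T -> T -> T) (e : T) :
  is_C_loop mul e ->
  is_commutative mul ->
  forall a : T, associator_subloop mul e a -> mul a a = e.
Proof.
  intros HL Hc a Ha. apply (Ha (fun a => mul a a = e)).
  - split; [apply (cl_idl HL)|]. split; [|split].
    + intros a0 b H1 H2. rewrite (hom _ _ _ HL Hc), H1, H2; auto. apply (cl_idl HL).
    + intros a0 b x H1 H2 E. rewrite <- E, (hom _ _ _ HL Hc), H1, (cl_idl HL) in H2. auto.
    + intros a0 b y H1 H2 E. rewrite <- E, (hom _ _ _ HL Hc), H1, (cl_idr HL) in H2. auto.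
  - intros x y z u Hu. unfold is_associator in Hu.
    assert (E : mul (mul (mul x y) z) (mul (mul x y) z)
              = mul (mul (mul x (mul y z)) (mul x (mul y z))) (mul u u)).
    { rewrite Hu. apply (hom _ _ _ HL Hc). }
    rewrite !(hom _ _ _ HL Hc) in E. rewrite (assoc_sq _ _ _ HL Hc) in E.
    set (B := mul (mul x x) (mul (mul y y) (mul z z))) in *.
    assert (E' : mul B e = mul B (mul u u)) by (rewrite (cl_idr HL); exact E).
    symmetry. exact (cl_canl HL _ _ _ E').
Qed.
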